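(* Consider the system of ordinary differential equations \[ \dot u=r_{1}u(1-u)-a_{12}uv-a_{13}uw,\qquad \dot v=r_{2}v(1-v)+a_{21}uv,\qquad \dot w=-\mu w+a_{31}uw, \] with all parameters $r_1,r_2,\mu,a_{12},a_{13},a_{21},a_{31}$ positive. Then every solution with nonnegative initial data is bounded for $t\ge0$.
   Context: Solutions starting in the nonnegative orthant remain nonnegative. *)

(* Defs.v *)
From Stdlib Require Import Reals.
From Coquelicot Require Import Coquelicot.
Open Scope R_scope.

Definition is_solution (r1 r2 mu a12 a13 a21 a31 : R) (u v w : R -> R) : Prop :=
  forall t, 0 <= t ->
    is_derive u t (r1 * u t * (1 - u t) - a12 * u t * v t - a13 * u t * w t) /\
    is_derive v t (r2 * v t * (1 - v t) + a21 * u t * v t) /\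
    is_derive w t (- mu * w t + a31 * u t * w t).

(* Main.v *)
Require Import Defs.
From Stdlib Require Import Reals Lra.
From Coquelicot Require Import Coquelicot.
Open Scope R_scope.

Lemma der_eq (f : R -> R) (x l l' : R) : is_derive f x l -> @eq R l l' -> is_derive f x l'.
Proof. intros H E. rewrite <- E. exact H. Qed.

Lemma der_cont (f : R -> R) x l : is_derive f x l -> continuity_pt f x.
Proof.
  intro H. apply is_derive_Reals in H.
  exact (derivable_continuous_pt f x (exist _ l H)).
Qed.

Lemma barrier (x dx : R -> R) (B T : R) : 0 <= T ->
  (forall t, 0 <= t <= T -> is_derive x t (dx t)) -> x 0 <= B ->
  (forall t, 0 < t <= T -> B < x t -> dx t < 0) -> x T <= B.
Proof.
  intros HT Hd H0 Hs.
  destruct (continuity_ab_maj x 0 T HT) as [m [Hm Hmr]].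
  { intros c Hc. exact (der_cont _ _ _ (Hd c Hc)). }
  destruct (Rle_or_lt (x T) B) as [h|h]; [exact h|exfalso].
  assert (HTm := Hm T (conj HT (Rle_refl T))).
  destruct (Req_dec m 0) as [e|ne].
  { subst m; lra. }
  assert (mpos : 0 < m) by lra.
  assert (Hl := Hs m (conj mpos (proj2 Hmr)) ltac:(lra)).
  assert (D := Hd m Hmr). apply is_derive_Reals in D.
  destruct (D (- dx m / 2) ltac:(lra)) as [del Hdel].
  set (h0 := - Rmin (del / 2) m).
  assert (Hmin1 : Rmin (del/2) m <= del/2) by apply Rmin_l.
  assert (Hmin2 : Rmin (del/2) m <= m) by apply Rmin_r.
  assert (Hmin3 : 0 < Rmin (del/2) m).
  { apply Rmin_pos; [destruct del; simpl; lra| lra]. }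
  assert (dpos := cond_pos del).
  assert (hneg : h0 < 0) by (unfold h0; lra).
  specialize (Hdel h0 ltac:(lra) ltac:(rewrite Rabs_left; unfold h0; lra)).
  assert (Hle : x (m + h0) <= x m) by (apply Hm; unfold h0; lra).
  assert (q : 0 <= (x (m + h0) - x m) / h0).
  { unfold Rdiv. assert (/ h0 < 0) by (apply Rinv_lt_0_compat; lra). nra. }
  apply Rabs_def2 in Hdel. lra.
Qed.

Lemma nonneg (x f : R -> R) : 0 <= x 0 ->
  (forall t, 0 <= t -> is_derive x t (x t * f t)) ->
  (forall t, 0 <= t -> continuity_pt f t) ->
  forall T, 0 <= T -> 0 <= x T.
Proof.
  intros H0 Hd Hc T HT.
  destruct (continuity_ab_maj f 0 T HT) as [m [Hm Hmr]].
  { intros c Hc'. apply Hc; lra. }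
  set (K := f m).
  set (c := -(K+1)).
  assert (He : forall t, is_derive (fun s => exp (c * s)) t (c * exp (c * t))).
  { intro t. auto_derive; [trivial| ring]. }
  assert (B := barrier (fun s => - (x s * exp (c * s)))
       (fun s => - (x s * f s * exp (c * s) + x s * (c * exp (c * s)))) 0 T HT).
  simpl in B.
  cut (- (x T * exp (c * T)) <= 0).
  { intro. assert (0 < exp (c*T)) by apply exp_pos. nra. }
  apply B.
  - intros t Ht.
    apply (@is_derive_opp R_AbsRing R_NormedModule (fun s => x s * exp (c*s))).
    apply (is_derive_mult x (fun s => exp (c*s))); [apply Hd; lra | apply He | ].
    intros; apply Rmult_comm.
  - rewrite Rmult_0_r, exp_0. lra.
  - intros t Ht Hpos. assert (E := exp_pos (c * t)).
    assert (f t <= K) by (apply Hm; lra).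
    unfold c in *.
    assert (x t < 0).
    { destruct (Rlt_or_le (x t) 0) as [h|h]; [exact h|].
      assert (0 <= x t * exp (- (K + 1) * t)) by (apply Rmult_le_pos; lra). lra. }
    assert (P : 0 < (- x t) * exp (- (K + 1) * t)) by (apply Rmult_lt_0_compat; lra).
    replace (- (x t * f t * exp (- (K + 1) * t) + x t * (- (K + 1) * exp (- (K + 1) * t))))
      with (((- x t) * exp (- (K + 1) * t)) * (f t - K - 1)) by ring.
    nra.
Qed.

Lemma cont_lin3 (p q r k : R) (a b c : R -> R) t :
  continuity_pt a t -> continuity_pt b t -> continuity_pt c t ->
  continuity_pt (fun s => p + q * a s + r * b s + k * c s) t.
Proof.
  intros Ha Hb Hc.
  apply continuity_pt_filterlim in Ha.
  apply continuity_pt_filterlim in Hb.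
  apply continuity_pt_filterlim in Hc.
  apply continuity_pt_filterlim.
  apply (continuous_plus (fun s => p + q * a s + r * b s) (fun s => k * c s)).
  apply (continuous_plus (fun s => p + q * a s) (fun s => r * b s)).
  apply (continuous_plus (fun s => p) (fun s => q * a s)).
  apply continuous_const.
  apply (continuous_scal_r q a); exact Ha.
  apply (continuous_scal_r r b); exact Hb.
  apply (continuous_scal_r k c); exact Hc.
Qed.

Theorem lemma1 (r1 r2 mu a12 a13 a21 a31 : R) (u v w : R -> R) :
  0 < r1 -> 0 < r2 -> 0 < mu -> 0 < a12 -> 0 < a13 -> 0 < a21 -> 0 < a31 ->
  is_solution r1 r2 mu a12 a13 a21 a31 u v w ->
  0 <= u 0 -> 0 <= v 0 -> 0 <= w 0 ->
  exists M : R, forall t, 0 <= t ->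
    Rabs (u t) <= M /\ Rabs (v t) <= M /\ Rabs (w t) <= M.
Proof.
  intros Hr1 Hr2 Hmu H12 H13 H21 H31 Hs Hu0 Hv0 Hw0.
  assert (Du : forall t, 0 <= t -> is_derive u t (r1 * u t * (1 - u t) - a12 * u t * v t - a13 * u t * w t))
    by (intros t Ht; apply (Hs t Ht)).
  assert (Dv : forall t, 0 <= t -> is_derive v t (r2 * v t * (1 - v t) + a21 * u t * v t))
    by (intros t Ht; apply (Hs t Ht)).
  assert (Dw : forall t, 0 <= t -> is_derive w t (- mu * w t + a31 * u t * w t))
    by (intros t Ht; apply (Hs t Ht)).
  assert (Cu : forall t, 0 <= t -> continuity_pt u t) by (intros t Ht; exact (der_cont _ _ _ (Du t Ht))).
  assert (Cv : forall t, 0 <= t -> continuity_pt v t) by (intros t Ht; exact (der_cont _ _ _ (Dv t Ht))).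
  assert (Cw : forall t, 0 <= t -> continuity_pt w t) by (intros t Ht; exact (der_cont _ _ _ (Dw t Ht))).
  assert (Pu : forall t, 0 <= t -> 0 <= u t).
  { apply (nonneg u (fun s => r1 + (- r1) * u s + (- a12) * v s + (- a13) * w s)); auto.
    - intros t Ht. apply (der_eq u t _ _ (Du t Ht)). ring.
    - intros t Ht. apply cont_lin3; auto. }
  assert (Pv : forall t, 0 <= t -> 0 <= v t).
  { apply (nonneg v (fun s => r2 + (- r2) * v s + a21 * u s + 0 * w s)); auto.
    - intros t Ht. eapply der_eq; [apply Dv; exact Ht| ring].
    - intros t Ht. apply cont_lin3; auto. }
  assert (Pw : forall t, 0 <= t -> 0 <= w t).
  { apply (nonneg w (fun s => - mu + a31 * u s + 0 * v s + 0 * w s)); auto.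
    - intros t Ht. eapply der_eq; [apply Dw; exact Ht| ring].
    - intros t Ht. apply cont_lin3; auto. }
  set (B1 := Rmax (u 0) 1).
  assert (B1a : u 0 <= B1) by apply Rmax_l.
  assert (B1b : 1 <= B1) by apply Rmax_r.
  assert (Bu : forall T, 0 <= T -> u T <= B1).
  { intros T HT. apply (barrier u (fun t => r1 * u t * (1 - u t) - a12 * u t * v t - a13 * u t * w t) B1 T HT); auto.
    - intros t Ht; apply Du; lra.
    - intros t Ht Hlt.
      assert (0 <= v t) by (apply Pv; lra). assert (0 <= w t) by (apply Pw; lra).
      replace (r1 * u t * (1 - u t) - a12 * u t * v t - a13 * u t * w t)
        with (u t * (r1 * (1 - u t) - a12 * v t - a13 * w t)) by ring.
      assert (r1 * (1 - u t) < 0) by nra.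
      assert (r1 * (1 - u t) - a12 * v t - a13 * w t < 0) by nra.
      nra. }
  set (B2 := Rmax (v 0) (1 + a21 * B1 / r2)).
  assert (B2a : v 0 <= B2) by apply Rmax_l.
  assert (B2b : 1 + a21 * B1 / r2 <= B2) by apply Rmax_r.
  assert (Bv : forall T, 0 <= T -> v T <= B2).
  { intros T HT. apply (barrier v (fun t => r2 * v t * (1 - v t) + a21 * u t * v t) B2 T HT); auto.
    - intros t Ht; apply Dv; lra.
    - intros t Ht Hlt.
      assert (0 <= u t) by (apply Pu; lra). assert (u t <= B1) by (apply Bu; lra).
      assert (E : r2 * (1 + a21 * B1 / r2) = r2 + a21 * B1) by (field; lra).
      assert (r2 * (1 + a21 * B1 / r2) < r2 * v t) by (apply Rmult_lt_compat_l; lra).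
      assert (a21 * u t <= a21 * B1) by (apply Rmult_le_compat_l; lra).
      replace (r2 * v t * (1 - v t) + a21 * u t * v t)
        with (v t * (r2 * (1 - v t) + a21 * u t)) by ring.
      assert (r2 * (1 - v t) + a21 * u t < 0) by nra.
      assert (0 < v t) by lra.
      nra. }
  set (z := fun t => a31 * u t + a13 * w t).
  set (B3 := Rmax (z 0) (a31 * B1 * (r1 + mu) / mu)).
  assert (B3a : z 0 <= B3) by apply Rmax_l.
  assert (B3b : a31 * B1 * (r1 + mu) / mu <= B3) by apply Rmax_r.
  assert (Bz : forall T, 0 <= T -> z T <= B3).
  { intros T HT. apply (barrier z (fun t => a31 * (r1 * u t * (1 - u t) - a12 * u t * v t - a13 * u t * w t)
        + a13 * (- mu * w t + a31 * u t * w t)) B3 T HT); auto.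
    - intros t Ht. unfold z.
      apply (is_derive_plus (K := R_AbsRing) (V := R_NormedModule) (fun s => a31 * u s) (fun s => a13 * w s)).
      + apply is_derive_scal. apply Du; lra.
      + apply is_derive_scal. apply Dw; lra.
    - intros t Ht Hlt. unfold z in Hlt.
      assert (0 <= u t) by (apply Pu; lra). assert (u t <= B1) by (apply Bu; lra).
      assert (0 <= v t) by (apply Pv; lra).
      assert (E : mu * (a31 * B1 * (r1 + mu) / mu) = a31 * B1 * (r1 + mu)) by (field; lra).
      assert (mu * (a31 * B1 * (r1 + mu) / mu) < mu * (a31 * u t + a13 * w t))
        by (apply Rmult_lt_compat_l; lra).
      assert (a31 * (r1 + mu) * u t <= a31 * (r1 + mu) * B1) by (apply Rmult_le_compat_l; nra).
      assert (0 <= a31 * r1 * (u t * u t)) by (apply Rmult_le_pos; nra).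
      assert (0 <= a31 * a12 * (u t * v t)) by (apply Rmult_le_pos; nra).
      replace (a31 * (r1 * u t * (1 - u t) - a12 * u t * v t - a13 * u t * w t)
        + a13 * (- mu * w t + a31 * u t * w t))
        with (a31 * (r1 + mu) * u t - a31 * r1 * (u t * u t) - a31 * a12 * (u t * v t)
              - mu * (a31 * u t + a13 * w t)) by ring.
      lra. }
  exists (B1 + B2 + B3 / a13).
  intros t Ht.
  assert (0 <= u t) by auto. assert (0 <= v t) by auto. assert (0 <= w t) by auto.
  assert (u t <= B1) by auto. assert (v t <= B2) by auto.
  assert (z t <= B3) by auto. unfold z in *.
  assert (a13 * w t <= B3) by nra.
  assert (w t <= B3 / a13).
  { apply (Rmult_le_reg_l a13); [lra|]. replace (a13 * (B3 / a13)) with B3 by (field; lra). lra. }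
  assert (0 <= B3 / a13) by lra.
  rewrite !Rabs_right by lra.
  repeat split; lra.
Qed.
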